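(* Fix constants $\lambda_1,\ldots,\lambda_K\ge 0$ and $\mu_1,\ldots,\mu_M\ge 0$. For a channel realization $\boldsymbol{\alpha}$ consider the problem $$\max_{p_1,\ldots,p_K\ge 0}\ \log\Big(1+\sum_{k=1}^K h_kp_k\Big)-\sum_{k=1}^K\lambda_kp_k-\sum_{m=1}^M\mu_m\sum_{k=1}^K g_{km}p_k .$$ Then, for almost every realization $\boldsymbol{\alpha}$, any optimal solution $(p_1^*,\ldots,p_K^* )$ of this problem has at most one index $i\in\{1,\ldots,K\}$ with $p_i^*>0$.
   Context: $\boldsymbol{\alpha}=(h_1,\ldots,h_K,g_{11},\ldots,g_{KM})$ is a random vector of nonnegative channel power gains ($h_k$: secondary user $k$ to secondary base station; $g_{km}$: secondary user $k$ to primary receiver $m$) with a continuous, differentiable joint cumulative distribution function, the $h_k$'s and $g_{km}$'s being independent. ''Almost every'' refers to the distribution of $\boldsymbol{\alpha}$. *)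

(* Defs.v *)
From HB Require Import structures.
From mathcomp Require Import all_boot all_order all_algebra.
From mathcomp Require Import all_classical all_reals all_analysis.
Set Implicit Arguments. Unset Strict Implicit. Unset Printing Implicit Defensive.
Import Order.TTheory GRing.Theory Num.Theory.
Import numFieldTopology.Exports numFieldNormedType.Exports.
Local Open Scope classical_set_scope.
Local Open Scope ring_scope.

(* Mutual independence of a finite family of real random variables:
   the product rule holds for every choice of measurable sets
   (taking B i = setT covers every subfamily). *)
Definition mutually_independent d (T : measurableType d) (R : realType)
  (P : probability T R) (I : finType) (X : I -> {RV P >-> R}) : Prop :=
  forall B : I -> set R, (forall i, measurable (B i)) ->
    P (\bigcap_(i in [set: I]) (X i @^-1` B i)) =
    (\prod_(i : I) P (X i @^-1` B i))%E.

(* The channel vector alpha = (h_1..h_K, g_11..g_KM) as a family indexed by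
   'I_K + 'I_K * 'I_M. *)
Definition alpha_family d (T : measurableType d) (R : realType)
  (P : probability T R) (K M : nat)
  (h : 'I_K -> {RV P >-> R}) (g : 'I_K -> 'I_M -> {RV P >-> R})
  (i : 'I_K + ('I_K * 'I_M)%type) : {RV P >-> R} :=
  match i with inl k => h k | inr km => g km.1 km.2 end.

Definition objective (R : realType) (K M : nat)
  (lam : 'I_K -> R) (mu : 'I_M -> R) (hv : 'I_K -> R) (gv : 'I_K -> 'I_M -> R)
  (p : 'I_K -> R) : R :=
  ln (1 + \sum_(k < K) hv k * p k) - \sum_(k < K) lam k * p k
  - \sum_(m < M) mu m * \sum_(k < K) gv k m * p k.

Definition is_optimal (R : realType) (K M : nat)
  (lam : 'I_K -> R) (mu : 'I_M -> R) (hv : 'I_K -> R) (gv : 'I_K -> 'I_M -> R)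
  (p : 'I_K -> R) : Prop :=
  (forall k, 0 <= p k) /\
  forall q : 'I_K -> R, (forall k, 0 <= q k) ->
    objective lam mu hv gv q <= objective lam mu hv gv p.

(* Main.v *)
Require Import Defs.
From HB Require Import structures.
From mathcomp Require Import all_boot all_order all_algebra.
From mathcomp Require Import all_classical all_reals all_analysis.
From mathcomp Require Import measurable_realfun.
From mathcomp Require Import ring lra.
Import Order.TTheory GRing.Theory Num.Theory.
Import numFieldTopology.Exports numFieldNormedType.Exports.
Local Open Scope classical_set_scope.
Local Open Scope ring_scope.
Set Implicit Arguments. Unset Strict Implicit. Unset Printing Implicit Defensive.
Definition Gsys d (T : measurableType d) (R : realType) (P : probability T R)
  (I : finType) (X : I -> {RV P >-> R}) (i0 : I) : set (set T) :=
  [set S | exists B : I -> set R, (forall k, measurable (B k)) /\ B i0 = setT /\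
     S = \bigcap_(k in [set: I]) (X k @^-1` B k)].

Lemma Gsys_setI d (T : measurableType d) (R : realType) (P : probability T R)
  (I : finType) (X : I -> {RV P >-> R}) (i0 : I) : setI_closed (Gsys X i0).
Proof.
move=> _ _ [B1 [mB1 [B1i ->]]] [B2 [mB2 [B2i ->]]].
exists (fun k => B1 k `&` B2 k); split; first by move=> k; exact: measurableI.
split; first by rewrite B1i B2i setIT.
by rewrite -bigcapI.
Qed.

Lemma Gsys_meas d (T : measurableType d) (R : realType) (P : probability T R)
  (I : finType) (X : I -> {RV P >-> R}) (i0 : I) S : Gsys X i0 S -> measurable S.
Proof.
move=> [B [mB [_ ->]]]; apply: fin_bigcap_measurable; first exact: finite_finset.
by move=> k _; exact: measurable_funPTI.
Qed.

Lemma indepX d (T : measurableType d) (R : realType) (P : probability T R)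
  (I : finType) (X : I -> {RV P >-> R}) (i0 : I) (A : set R) S :
  mutually_independent X -> measurable A ->
  <<s Gsys X i0 >> S -> P (X i0 @^-1` A `&` S) = (P (X i0 @^-1` A) * P S)%E.
Proof.
move=> hind mA.
set XA := X i0 @^-1` A.
have mXA : measurable XA by exact: measurable_funPTI.
have finP (U : set T) : measurable U -> P U \is a fin_num.
  by move=> mU; exact: fin_num_measure.
pose H := [set S | measurable S /\ P (XA `&` S) = (P XA * P S)%E].
suff: <<s Gsys X i0 >> `<=` H by move=> h /h [].
apply: lambda_system_subset; [exact: Gsys_setI| | | by []].
- apply/dynkin_lambda_system; split.
  + split; first exact: measurableT.
    by rewrite setIT probability_setT mule1.
  + move=> U [mU hU]; split; first exact: measurableC.
    rewrite -setDE (measureD mXA mU); last by rewrite ltey_eq finP.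
    transitivity (P XA - P XA * P U)%E; first by congr (_ - _)%E; exact: hU.
    rewrite probability_setC // muleBr ?mule1 //.
    exact: finP.
  + move=> F tF hF; split.
      by apply: bigcup_measurable => k _; case: (hF k).
    rewrite setI_bigcupr measure_bigcup //; last first.
      by apply: trivIset_setIl.
      by move=> k _; apply: measurableI => //; case: (hF k).
    rewrite measure_bigcup //; last by move=> k _; case: (hF k).
    rewrite -(fineK (finP _ mXA)) -nneseriesZl //.
    by apply: eq_eseriesr => k _; rewrite fineK ?finP //; case: (hF k).
- move=> _ [B [mB [Bi ->]]]; split; first by apply: (@Gsys_meas _ _ _ _ _ X i0); exists B.
  pose B' k := if k == i0 then A else B k.
  have mB' k : measurable (B' k) by rewrite /B'; case: eqP.
  have -> : XA `&` \bigcap_(k in [set: I]) X k @^-1` B k =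
            \bigcap_(k in [set: I]) X k @^-1` B' k.
    apply/seteqP; split => w /=.
    - move=> [XAw Hw] k _; rewrite /B'; case: eqP => [->//|_]; exact: Hw.
    - move=> Hw; split; first by have := Hw i0 Logic.I; rewrite /B' eqxx.
      move=> k _; have := Hw k Logic.I; rewrite /B'; case: eqP => // ->; by rewrite Bi.
  rewrite (hind B') // (hind B) // (bigD1 i0) //= [in RHS](bigD1 i0) //=.
  rewrite /B' eqxx Bi preimage_setT probability_setT mul1e.
  congr (_ * _)%E; apply: eq_bigr => k /negbTE ->; by [].
Qed.
Lemma inv_meas (R : realType) : measurable_fun [set: R] (@GRing.inv R).
Proof.
have -> : [set: R] = [set 0] `|` [set x | x != 0].
  by apply/seteqP; split => x //= _; case: eqP; [left|right].
apply/measurable_funU => //.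
  by apply: open_measurable; exact: open_neq.
split; first exact: measurable_fun_set1.
apply: open_continuous_measurable_fun; first exact: open_neq.
move=> x; rewrite inE /= => x0; exact: inv_continuous.
Qed.
Lemma quantiles (R : realType) (F : R -> R) (N : nat) :
  continuous F -> {homo F : x y / x <= y} -> F (-1) = 0 ->
  F x @[x --> +oo%R] --> (1:R) -> (0 < N)%N ->
  exists a : nat -> R, forall k, (k < N)%N -> F (a k) = k%:R / N%:R.
Proof.
move=> cF hF F0 F1 N0.
have : \forall t \near +oo, 0 < t /\ 1 - N%:R^-1 < F t.
  apply: filterI; first exact: nbhs_pinfty_gt.
  apply: (cvgr_gt 1 F1); rewrite ltrBlDl ltrDr invr_gt0 ltr0n //.
case=> M [Mr HM].
have ML : M < `|M| + 1 by rewrite (le_lt_trans (ler_norm M)) // ltrDl.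
set L := `|M| + 1.
have [L0 FL] := HM L ML.
have Nr : 0 < N%:R :> R by rewrite ltr0n.
have : forall k, exists c, (k < N)%N -> F c = k%:R / N%:R.
  move=> k; case: (ltnP k N) => kN; last by exists 0.
  have [c _ Fc] : exists2 c, c \in `[-1, L] & F c = k%:R / N%:R.
    apply: IVT; first by rewrite (le_trans _ (ltW L0)) // lerN10.
      exact: continuous_subspaceT.
    have FLge : 0 <= F L by rewrite -F0 hF // (le_trans _ (ltW L0)) // lerN10.
    rewrite F0 (min_l FLge) (max_r FLge) divr_ge0 ?ler0n //=.
    apply/ltW/(le_lt_trans _ FL).
    rewrite lerBrDr.
    have -> : k%:R / N%:R + N%:R^-1 = (k.+1)%:R / N%:R :> R by rewrite -addn1 natrD mulrDl mul1r.
    by rewrite ler_pdivrMr // mul1r ler_nat.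
  by exists c.
by case/choice => a Ha; exists a.
Qed.
Lemma sub_meas d (T : measurableType d) (R : realType) (P : probability T R)
  (I : finType) (X : I -> {RV P >-> R}) (i0 : I) :
  <<s Gsys X i0 >> `<=` d.-measurable.
Proof.
apply: smallest_sub; first exact: sigma_algebra_measurable.
move=> S; exact: Gsys_meas.
Qed.

Lemma coord_meas d (T : measurableType d) (R : realType) (P : probability T R)
  (I : finType) (X : I -> {RV P >-> R}) (i0 k : I) : k != i0 ->
  measurable_fun [set: g_sigma_algebraType (Gsys X i0)]
    (fun w : g_sigma_algebraType (Gsys X i0) => X k w).
Proof.
move=> ki _ B mB; rewrite setTI; apply: sub_sigma_algebra.
exists (fun l => if l == k then B else setT); split.
  by move=> l; case: eqP.
split; first by rewrite eq_sym (negbTE ki).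
apply/seteqP; split => w /=.
- by move=> Bw l _; case: eqP => [->//|].
- by move=> /(_ k Logic.I); rewrite eqxx.
Qed.

Lemma meas_T d (T : measurableType d) (R : realType) (P : probability T R)
  (I : finType) (X : I -> {RV P >-> R}) (i0 : I)
  (Z : g_sigma_algebraType (Gsys X i0) -> R) :
  measurable_fun [set: g_sigma_algebraType (Gsys X i0)] Z ->
  measurable_fun [set: T] (Z : T -> R).
Proof. by move=> mZ _ B mB; apply: sub_meas; exact: mZ. Qed.

Lemma ML d (T : measurableType d) (R : realType) (P : probability T R)
  (I : finType) (X : I -> {RV P >-> R}) (i0 : I)
  (Z : g_sigma_algebraType (Gsys X i0) -> R) :
  mutually_independent X ->
  (forall w, 0 <= X i0 w) ->
  continuous (fun t : R => fine (cdf (X i0) t)) ->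
  measurable_fun [set: g_sigma_algebraType (Gsys X i0)] Z ->
  P [set w | X i0 w = Z w] = 0%E.
Proof.
move=> hind Xge0 cF mZ.
set Y := X i0.
set F := fun t : R => fine (cdf Y t).
have finP (U : set T) : measurable U -> P U \is a fin_num.
  by move=> mU; exact: fin_num_measure.
have cdfE t : cdf Y t = (F t)%:E.
  by rewrite /F fineK // fin_num_measure.
have hF : {homo F : x y / x <= y}.
  by move=> x y xy; rewrite /F fine_le ?fin_num_measure ?cdf_nondecreasing.
have F0 : F (-1) = 0.
  rewrite /F /cdf /distribution /pushforward.
  have -> : Y @^-1` `]-oo, -1] = set0.
    apply/seteqP; split => w //=; rewrite in_itv /= => h.
    by have := Xge0 w; rewrite -/Y leNgt (le_lt_trans h) // ltrN10.
  by rewrite measure0.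
have F1 : F x @[x --> +oo%R] --> (1:R).
  exact/fine_cvg/cvg_cdfy1.
set E := [set w | Y w = Z w].
have mYT : measurable_fun [set: T] Y by exact: measurable_funP.
have mZT := meas_T mZ.
have mE : measurable E.
  have -> : E = [set: T] `&` (fun w => Y w - Z w) @^-1` [set 0].
    apply/seteqP; split => w /=.
    - by move=> ->; rewrite subrr.
    - by move=> [_ /eqP]; rewrite subr_eq0 => /eqP.
  by apply: measurable_funB => //; exact: measurable_set1.
suff H : forall n : nat, fine (P E) <= n.+1%:R^-1.
  rewrite -(fineK (finP E mE)); congr EFin; apply/eqP; rewrite eq_le.
  rewrite fine_ge0 ?measure_ge0 // andbT.
  apply/unstable.ler_gtP => e e0.
  apply: (le_trans (H (Num.Def.trunc e^-1))).
  rewrite -[X in _ <= X]invrK lef_pV2 ?posrE ?invr_gt0 ?ltr0n //.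
  exact: ltW (truncnS_gt _).
move=> n.
set N := n.+1.
have Npos : (0 < N)%N by [].
have Nr : 0 < N%:R :> R by rewrite ltr0n.
have [a Ha] := quantiles cF hF F0 F1 Npos.
have amono k l : (k < l)%N -> (l < N)%N -> a k < a l.
  move=> kl lN; rewrite ltNge; apply/negP => lk.
  have := hF _ _ lk; rewrite /F /Y !Ha ?(ltn_trans kl lN) //.
  by rewrite ler_pM2r ?invr_gt0 // ler_nat leqNgt kl.
pose C k : set R := if (k.+1 < N)%N then `]a k, a k.+1]%classic else `]a k, +oo[%classic.
have mC k : measurable (C k) by rewrite /C; case: ifP.
have Cdisj k l x : (k < N)%N -> (l < N)%N -> C k x -> C l x -> k = l.
  wlog kl : k l / (k <= l)%N.
    move=> W kN lN Ck Cl; case: (leqP k l) => kl; first exact: W.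
    by apply/esym/W => //; exact: ltnW.
  move=> kN lN; rewrite leq_eqVlt in kl; case/orP: kl => [/eqP//|kl].
  have k1N : (k.+1 < N)%N by apply: leq_ltn_trans lN.
  have akl : a k.+1 <= a l.
    rewrite leq_eqVlt in kl; case/orP: kl => [/eqP->//|kl].
    exact/ltW/amono.
  rewrite /C k1N /= !in_itv /= => /andP[_ xk].
  case: ifP => _; rewrite /= in_itv /= => /andP[lx _];
    by have := lt_le_trans lx (le_trans xk akl); rewrite ltxx.
have FaE k : (k < N)%N -> F (a k) = k%:R / N%:R by move=> kN; rewrite /F /Y Ha.
have PC k : (k < N)%N -> P (Y @^-1` C k) = (N%:R^-1)%:E.
  move=> kN; rewrite /C; case: ifP => k1N.
  - have mA : measurable (Y @^-1` `]-oo, a k]) by exact: measurable_funPTI.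
    have mB : measurable (Y @^-1` `]a k, a k.+1]) by exact: measurable_funPTI.
    have disj : Y @^-1` `]-oo, a k] `&` Y @^-1` `]a k, a k.+1] = set0.
      apply/seteqP; split => w //=; rewrite !in_itv /= => -[h /andP[h' _]].
      by have := le_lt_trans h h'; rewrite ltxx.
    have hU : P (Y @^-1` `]-oo, a k] `|` Y @^-1` `]a k, a k.+1]) =
      (P (Y @^-1` `]-oo, a k]) + P (Y @^-1` `]a k, a k.+1]))%E := measureU P mA mB disj.
    have eqs : Y @^-1` `]-oo, a k] `|` Y @^-1` `]a k, a k.+1] = Y @^-1` `]-oo, a k.+1].
      apply/seteqP; split => w /=; rewrite !in_itv /=.
      - case=> [h|/andP[_ ->//]]; apply: (le_trans h); exact/ltW/amono.
      - move=> h; case: (leP (Y w) (a k)) => hk; [by left|right].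
        by rewrite h.
    rewrite eqs in hU.
    move: hU; have := cdfE (a k.+1); have := cdfE (a k); rewrite /cdf /distribution /pushforward.
    move=> -> -> hU; rewrite -(fineK (finP _ mB)) -EFinD in hU.
    have h := EFin_inj hU.
    rewrite -(fineK (finP _ mB)); congr EFin; apply: (@addrI _ (F (a k))); rewrite -h !FaE //.
    by rewrite -addn1 natrD mulrDl mul1r.
  - have kn : k = n by apply/eqP; rewrite eqn_leq -ltnS kN leqNgt -ltnS k1N.
    have mA : measurable (Y @^-1` `]-oo, a k]) by exact: measurable_funPTI.
    have -> : Y @^-1` `]a k, +oo[ = ~` (Y @^-1` `]-oo, a k]).
      apply/seteqP; split => w /=; rewrite !in_itv /= andbT.
      - by move=> h h'; have := lt_le_trans h h'; rewrite ltxx.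
      - by move/negP; rewrite -ltNge.
    rewrite probability_setC //.
    have := cdfE (a k); rewrite /cdf /distribution /pushforward => ->.
    rewrite FaE // kn -EFinB; congr EFin.
    apply: (@mulIf _ N%:R); first by rewrite pnatr_eq0.
    rewrite mulrBl mulfVK ?pnatr_eq0 // mul1r mulVf ?pnatr_eq0 //.
    by rewrite /N -addn1 natrD addrAC subrr add0r.
pose Zc k : set T := (Z : T -> R) @^-1` C k.
have mZc k : <<s Gsys X i0 >> (Zc k).
  by have := mZ measurableT _ (mC k); rewrite setTI.
have mZcT k : measurable (Zc k) by apply: sub_meas; exact: mZc.
pose S k : set T := Y @^-1` C k `&` Zc k.
have mS k : measurable (S k).
  by apply: measurableI => //; exact: measurable_funPTI.
pose U := \big[setU/set0]_(k < N) S k.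
have mU : measurable U by apply: bigsetU_measurable => k _.
have mA0 : measurable (Y @^-1` `]-oo, a 0%N]) by exact: measurable_funPTI.
have cover : E `<=` Y @^-1` `]-oo, a 0%N] `|` U.
  move=> w /= Ew; case: (leP (Y w) (a 0)) => h0; first by left; rewrite in_itv.
  right; rewrite /U -bigcup_mkord.
  pose Q := fun k => (k < N)%N && (a k < Y w).
  have exQ : exists k, Q k by exists 0%N; rewrite /Q h0.
  have ubQ : forall k, Q k -> (k <= n)%N by move=> k /andP[].
  case: (ex_maxnP exQ ubQ) => k /andP[kN ak] kmax.
  exists k => //.
  have YC : C k (Y w).
    rewrite /C; case: ifP => k1N; rewrite /= in_itv /= ak //=.
    rewrite leNgt; apply/negP => h.
    by have := kmax k.+1; rewrite /Q k1N h => /(_ erefl); rewrite ltnn.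
  by split => //; rewrite /Zc /= -Ew.
have trivS : trivIset [set: 'I_N] (fun k : 'I_N => S k).
  move=> i j _ _ [w [[Yi _] [Yj _]]]; apply: val_inj.
  exact: (Cdisj _ _ _ (ltn_ord i) (ltn_ord j) Yi Yj).
have trivZ : trivIset [set: 'I_N] (fun k : 'I_N => Zc k).
  move=> i j _ _ [w [Zi Zj]]; apply: val_inj.
  exact: (Cdisj _ _ _ (ltn_ord i) (ltn_ord j) Zi Zj).
have PA0 : P (Y @^-1` `]-oo, a 0%N]) = 0%E.
  have := cdfE (a 0); rewrite /cdf /distribution /pushforward => ->.
  by rewrite FaE // mul0r.
have PU : P U = (\sum_(k < N) P (S k))%E :=
  measure_bigsetU_ord P xpredT (fun k => mS k) trivS.
have PZ : P (\big[setU/set0]_(k < N) Zc k) = (\sum_(k < N) P (Zc k))%E :=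
  measure_bigsetU_ord P xpredT (fun k => mZcT k) trivZ.
have hE : (P E <= (N%:R^-1)%:E)%E.
  have hle : (P E <= P (Y @^-1` `]-oo, a 0%N] `|` U))%E.
    by apply: le_measure => //; rewrite inE //; exact: measurableU.
  apply: (le_trans hle).
  have hU2 : (P (Y @^-1` `]-oo, a 0%N] `|` U) <= P (Y @^-1` `]-oo, a 0%N]) + P U)%E :=
    measureU2 P mA0 mU.
  apply: (le_trans hU2).
  rewrite PA0 add0e PU.
  rewrite (eq_bigr (fun k : 'I_N => (N%:R^-1)%:E * P (Zc k)))%E; last first.
    by move=> k _; rewrite /S (indepX hind (mC k) (mZc k)) PC.
  rewrite -ge0_sume_distrr; last by move=> k _; exact: measure_ge0.
  rewrite -PZ; apply: (le_trans (lee_wpmul2l _ (probability_le1 _ _))).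
  - by rewrite lee_fin invr_ge0 ler0n.
  - by apply: bigsetU_measurable => k _.
  - by rewrite mule1.
by rewrite -lee_fin fineK // finP.
Qed.
Definition lin (R : realType) (K M : nat) (lam : 'I_K -> R) (mu : 'I_M -> R)
  (gv : 'I_K -> 'I_M -> R) (p : 'I_K -> R) : R :=
  \sum_(k < K) lam k * p k + \sum_(m < M) mu m * \sum_(k < K) gv k m * p k.

Lemma objE (R : realType) (K M : nat) lam mu hv gv (p : 'I_K -> R) :
  objective lam mu hv gv p = ln (1 + \sum_(k < K) hv k * p k) - @lin R K M lam mu gv p.
Proof. by rewrite /objective /lin opprD addrA. Qed.

Lemma sum_lin (R : realType) (K : nat) (x p v : 'I_K -> R) t :
  \sum_(k < K) x k * (p k + t * v k) = \sum_(k < K) x k * p k + t * \sum_(k < K) x k * v k.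
Proof.
rewrite mulr_sumr -big_split; apply: eq_bigr => k _.
by rewrite mulrDr mulrCA.
Qed.

Lemma lin_lin (R : realType) (K M : nat) lam mu gv (p v : 'I_K -> R) t :
  @lin R K M lam mu gv (fun k => p k + t * v k) = lin lam mu gv p + t * lin lam mu gv v.
Proof.
rewrite /lin sum_lin mulrDr.
have -> : \sum_(m < M) mu m * \sum_(k < K) gv k m * (p k + t * v k) =
   \sum_(m < M) mu m * \sum_(k < K) gv k m * p k + t * \sum_(m < M) mu m * \sum_(k < K) gv k m * v k.
  rewrite mulr_sumr -big_split; apply: eq_bigr => m _.
  by rewrite sum_lin mulrDr mulrCA.
by rewrite !addrA; congr (_ + _); rewrite addrAC.
Qed.

Lemma sum_ind (R : realType) (K : nat) (x : 'I_K -> R) (i : 'I_K) c :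
  \sum_(k < K) x k * (if k == i then c else 0) = x i * c.
Proof.
rewrite (bigD1 i) //= eqxx big1 ?addr0 // => k /negbTE ->; by rewrite mulr0.
Qed.

Definition cc (R : realType) (K M : nat) (lam : 'I_K -> R) (mu : 'I_M -> R)
  (gv : 'I_K -> 'I_M -> R) (k : 'I_K) : R := lam k + \sum_(m < M) mu m * gv k m.

Lemma opt_dir (R : realType) (K M : nat) lam mu hv gv (p v : 'I_K -> R) t :
  @is_optimal R K M lam mu hv gv p -> (forall k, 0 <= p k + t * v k) ->
  \sum_(k < K) hv k * v k = 0 -> 0 <= t * lin lam mu gv v.
Proof.
move=> [_ opt] hq Sv; have := opt _ hq.
rewrite !objE lin_lin sum_lin Sv mulr0 addr0 => h.
lra.
Qed.

Lemma opt_swap (R : realType) (K M : nat) lam mu hv gv (p : 'I_K -> R) i j :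
  (forall k, 0 <= hv k) -> @is_optimal R K M lam mu hv gv p ->
  i != j -> 0 < p i -> 0 < p j ->
  hv j * cc lam mu gv i = hv i * cc lam mu gv j.
Proof.
move=> h0 opt ij pi pj.
pose v k := (if k == i then hv j else 0) - (if k == j then hv i else 0).
have Sx (x : 'I_K -> R) : \sum_(k < K) x k * v k = x i * hv j - x j * hv i.
  rewrite /v; under eq_bigr do rewrite mulrBr.
  by rewrite sumrB !sum_ind.
have Sv : \sum_(k < K) hv k * v k = 0 by rewrite Sx mulrC subrr.
have Lv : lin lam mu gv v = hv j * cc lam mu gv i - hv i * cc lam mu gv j.
  rewrite /lin /cc Sx.
  under eq_bigr do rewrite Sx.
  rewrite !mulrDr; under eq_bigr do rewrite mulrBr.
  rewrite sumrB !mulr_sumr.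
  have -> : \sum_(i0 < M) hv j * (mu i0 * gv i i0) = \sum_(i0 < M) mu i0 * (gv i i0 * hv j).
    by apply: eq_bigr => m _; ring.
  have -> : \sum_(i0 < M) hv i * (mu i0 * gv j i0) = \sum_(i0 < M) mu i0 * (gv j i0 * hv i).
    by apply: eq_bigr => m _; ring.
  ring.
set m := Num.min (p i) (p j).
have mi : m <= p i by rewrite ge_min lexx.
have mj : m <= p j by rewrite ge_min lexx orbT.
have mpos : 0 < m by rewrite lt_min pi pj.
have hi0 := h0 i; have hj0 := h0 j.
have den : 0 < hv i + hv j + 1 by lra.
set e := m / (hv i + hv j + 1).
have e0 : 0 < e by rewrite divr_gt0.
have eden : e * (hv i + hv j + 1) = m by rewrite /e mulfVK // gt_eqF.
have ehj : e * hv j <= p i by nra.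
have ehi : e * hv i <= p j by nra.
have hq t : -e <= t <= e -> forall k, 0 <= p k + t * v k.
  move=> /andP[t1 t2] k; rewrite /v.
  have pk := opt.1 k.
  case: eqP => [->|_]; case: eqP => [ki|_].
  - by move: ij; rewrite ki eqxx.
  - rewrite subr0; have : 0 <= (t + e) * hv j by apply: mulr_ge0; lra.
    nra.
  - rewrite sub0r ki; have : 0 <= (e - t) * hv i by apply: mulr_ge0; lra.
    nra.
  - by rewrite subrr mulr0 addr0.
have c1 : -e <= e <= e by rewrite lexx andbT; lra.
have c2 : -e <= -e <= e by rewrite lexx /=; lra.
have h1 := opt_dir opt (hq e c1) Sv.
have h2 := opt_dir opt (hq (-e) c2) Sv.
rewrite Lv in h1 h2.
have : hv j * cc lam mu gv i - hv i * cc lam mu gv j = 0 by nra.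
by move/eqP; rewrite subr_eq0 => /eqP.
Qed.

Lemma opt_zero (R : realType) (K M : nat) lam mu hv gv (p : 'I_K -> R) j :
  (forall k, 0 <= hv k) -> @is_optimal R K M lam mu hv gv p ->
  cc lam mu gv j = 0 -> hv j = 0.
Proof.
move=> h0 [pge opt] cj.
pose v k : R := if k == j then 1 else 0.
have hq : forall k, 0 <= p k + 1 * v k.
  by move=> k; rewrite mul1r /v; case: eqP => _; rewrite ?addr0 // addr_ge0.
have := opt _ hq.
rewrite !objE lin_lin sum_lin /v sum_ind.
have -> : lin lam mu gv (fun k => if k == j then 1 else 0) = cc lam mu gv j.
  rewrite /lin /cc sum_ind mulr1; congr (_ + _); apply: eq_bigr => m _.
  by rewrite sum_ind mulr1.
rewrite cj mulr0 addr0 mul1r lerD2r.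
have S0 : 0 <= \sum_(k < K) hv k * p k by apply: sumr_ge0 => k _; exact: mulr_ge0.
rewrite ler_ln ?posrE; last 2 first.
- have := h0 j; lra.
- lra.
move=> h; have := h0 j; lra.
Qed.
Lemma meas_eq d (T : measurableType d) (R : realType) (Y Z : T -> R) :
  measurable_fun [set: T] Y -> measurable_fun [set: T] Z ->
  measurable [set w | Y w = Z w].
Proof.
move=> mY mZ.
have -> : [set w | Y w = Z w] = [set: T] `&` (fun w => Y w - Z w) @^-1` [set 0].
  apply/seteqP; split => w /=.
  - by move=> ->; rewrite subrr.
  - by move=> [_ /eqP]; rewrite subr_eq0 => /eqP.
by apply: measurable_funB => //; exact: measurable_set1.
Qed.

Unset Implicit Arguments.

Theorem lemma3p1 (d : measure_display) (T : measurableType d) (R : realType)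
  (P : probability T R) (K M : nat)
  (h : 'I_K -> {RV P >-> R}) (g : 'I_K -> 'I_M -> {RV P >-> R})
  (lam : 'I_K -> R) (mu : 'I_M -> R) :
  (forall k, 0 <= lam k) -> (forall m, 0 <= mu m) ->
  (forall k w, 0 <= h k w) -> (forall k m w, 0 <= g k m w) ->
  mutually_independent (alpha_family h g) ->
  (forall i, continuous ((fun t : R => fine (cdf (alpha_family h g i) t)) : R -> R)) ->
  (forall i (t : R), derivable ((fun t : R => fine (cdf (alpha_family h g i) t)) : R -> R) t 1) ->
  {ae P, forall w : T,
     forall p : 'I_K -> R,
       is_optimal lam mu (fun k => h k w) (fun k m => g k m w) p ->
       forall i j : 'I_K, 0 < p i -> 0 < p j -> i = j}.
Proof.
move=> hlam hmu hh hg hind hcont _.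
set Xf := alpha_family h g.
pose Q (i j : 'I_K) (w : T) := forall p : 'I_K -> R,
  is_optimal lam mu (fun k => h k w) (fun k m => g k m w) p ->
  0 < p i -> 0 < p j -> i = j.
have aeF : Filter (almost_everywhere P) := ae_filter_ringOfSetsType P.
suff H : forall i j, almost_everywhere P (Q i j).
  have := filter_forall aeF (fun i => filter_forall aeF (H i)).
  apply: filterS => w Hw p opt i j pi pj; exact: Hw i j p opt pi pj.
move=> i j.
have [->|ij] := eqVneq i j.
  by apply: (@filterE _ _ aeF) => w p.
pose G1 := Gsys Xf (inl j).
have N1 : P [set w | Xf (inl j) w = (fun _ : g_sigma_algebraType G1 => 0 : R) w] = 0%E.
  apply: ML; [exact: hind | move=> w; exact: hh | exact: hcont | exact: measurable_cst].
pose G2 := Gsys Xf (inl i).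
pose cf k (w : g_sigma_algebraType G2) := lam k + \sum_(m < M) mu m * Xf (inr (k, m)) w.
have mcf k : measurable_fun [set: g_sigma_algebraType G2] (cf k).
  apply: measurable_funD; first exact: measurable_cst.
  apply: measurable_sum => m; apply: measurable_funM; first exact: measurable_cst.
  exact: coord_meas.
pose Z2 (w : g_sigma_algebraType G2) := Xf (inl j) w * cf i w * (cf j w)^-1.
have mZ2 : measurable_fun [set: g_sigma_algebraType G2] Z2.
  apply: measurable_funM; first apply: measurable_funM.
  - by apply: coord_meas; apply/negP => /eqP [] /eqP; rewrite eq_sym (negbTE ij).
  - exact: mcf.
  - have hc := measurableT_comp (@inv_meas R) (mcf j).
    exact: hc.
have N2 : P [set w | Xf (inl i) w = Z2 w] = 0%E.
  apply: ML; [exact: hind | move=> w; exact: hh | exact: hcont | exact: mZ2].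
pose A1 := [set w | Xf (inl j) w = (fun _ : g_sigma_algebraType G1 => 0 : R) w].
pose A2 := [set w | Xf (inl i) w = Z2 w].
have mA1 : measurable A1.
  by apply: meas_eq; [exact: measurable_funP | exact: measurable_cst].
have mA2 : measurable A2.
  by apply: meas_eq; [exact: measurable_funP | exact: meas_T mZ2].
exists (A1 `|` A2); split; first exact: measurableU.
  apply/eqP; rewrite eq_le measure_ge0 andbT.
  have hU2 : (P (A1 `|` A2) <= P A1 + P A2)%E := measureU2 P mA1 mA2.
  by rewrite (le_trans hU2) // N1 N2 adde0.
move=> w /= nQ; case: (pselect ((A1 `|` A2) w)) => // nA; exfalso; apply: nQ.
move=> p opt pi pj.
have h0 : forall k, 0 <= h k w by move=> k; exact: hh.
have sw := opt_swap h0 opt ij pi pj.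
have [hj0|hj0] := eqVneq (h j w) 0.
  by exfalso; apply: nA; left.
have cj0 : cc lam mu (fun k m => g k m w) j != 0.
  by apply/negP => /eqP /(opt_zero h0 opt) /eqP; rewrite (negbTE hj0).
exfalso; apply: nA; right; rewrite /A2 /Z2 /=.
by rewrite -[cf i w]/(cc lam mu (fun k m => g k m w) i) sw mulfK.
Qed.
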